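(* For all $n\ge0$, $0\le k\le n$ and complex $a,b,c_0,c_\infty$, $$b^kk!\,E_{n,k}(a,b;c_0,c_\infty)=\sum_{j=0}^k(-1)^{k-j}\binom kj(bn+c_0+c_\infty)^{\underline{k-j},b}(c_0+c_\infty)^{\overline j,b}(bj+c_0)^{\underline n,a},$$ $$(c_0+c_\infty)^{\overline k,b}\,(bk+c_0)^{\underline n,a}=\sum_{j=0}^k\binom kj(bn+c_0+c_\infty)^{\overline{k-j},b}\,b^jj!\,E_{n,j}(a,b;c_0,c_\infty).$$
   Context: GKP triangle $\left[\begin{array}{cc|c}\alpha,&\beta&\gamma\\ \alpha',&\beta'&\gamma'\end{array}\right]_{n,k}$: defined by $T_{0,0}=1$, $T_{n,k}=0$ if $n<0$, $k<0$ or $k>n$, and $T_{n+1,k+1}=[\alpha n+\beta(k+1)+\gamma]T_{n,k+1}+[\alpha' n+\beta' k+\gamma']T_{n,k}$ for $n\ge0$, $k\in\mathbb Z$. Generalized Eulerian numbers: $E_{n,k}(a,b;c_0,c_\infty):=\left[\begin{array}{cc|c}-a,&b&c_0\\ a+b,&-b&c_\infty\end{array}\right]_{n,k}$. $(x)^{\overline n,b}=\prod_{i=0}^{n-1}(x+ib)$, $(x)^{\underline n,b}=\prod_{i=0}^{n-1}(x-ib)$. *)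

(* Defs.v *)
From HB Require Import structures.
From mathcomp Require Import all_boot all_order all_algebra.
From mathcomp Require Import reals.
From mathcomp.real_closed Require Export complex.
Set Implicit Arguments. Unset Strict Implicit. Unset Printing Implicit Defensive.
Import Order.TTheory GRing.Theory Num.Theory.
Local Open Scope ring_scope.

(* Indices k are natural numbers; the values T_{n,k} with k < 0 are 0 by
   definition, so the recurrence at k+1 = 0 reads T_{n+1,0} = (alpha n + gamma) T_{n,0}. *)
Fixpoint gkp (F : comRingType) (al be ga al' be' ga' : F) (n : nat) : nat -> F :=
  match n with
  | 0 => fun k => if k == 0%N then 1 else 0
  | m.+1 => fun k =>
      match k with
      | 0 => (al * m%:R + ga) * gkp al be ga al' be' ga' m 0
      | j.+1 => (al * m%:R + be * j.+1%:R + ga) * gkp al be ga al' be' ga' m j.+1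
              + (al' * m%:R + be' * j%:R + ga') * gkp al be ga al' be' ga' m j
      end
  end.

Definition genEuler (F : comRingType) (a b c0 cinf : F) (n k : nat) : F :=
  gkp (- a) b c0 (a + b) (- b) cinf n k.

Definition risef (F : comRingType) (x b : F) (n : nat) : F :=
  \prod_(i < n) (x + i%:R * b).

Definition fallf (F : comRingType) (x b : F) (n : nat) : F :=
  \prod_(i < n) (x - i%:R * b).

(* Main.v *)
Require Import Defs.
From HB Require Import structures.
From mathcomp Require Import all_boot all_order all_algebra.
From mathcomp Require Import reals.
From mathcomp.real_closed Require Import complex.
From mathcomp Require Import ring.
Import Order.TTheory GRing.Theory Num.Theory.
Local Open Scope ring_scope.

Section Gen.
Context {F : comRingType}.
Implicit Types x y z b : F.

Lemma risefS_l x b m : risef x b m.+1 = x * risef (x + b) b m.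
Proof.
rewrite /risef big_ord_recl /= mul0r addr0; congr (_ * _).
apply: eq_bigr => i _; rewrite /bump /=; ring.
Qed.

Lemma risefS_r x b m : risef x b m.+1 = risef x b m * (x + m%:R * b).
Proof. by rewrite /risef big_ord_recr. Qed.

Lemma fallfS_l x b m : fallf x b m.+1 = x * fallf (x - b) b m.
Proof.
rewrite /fallf big_ord_recl /= mul0r subr0; congr (_ * _).
apply: eq_bigr => i _; rewrite /bump /=; ring.
Qed.

Lemma fallfS_r x b m : fallf x b m.+1 = fallf x b m * (x - m%:R * b).
Proof. by rewrite /fallf big_ord_recr. Qed.

Lemma risef0 x b : risef x b 0 = 1.
Proof. by rewrite /risef big_ord0. Qed.
Lemma fallf0 x b : fallf x b 0 = 1.
Proof. by rewrite /fallf big_ord0. Qed.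

Lemma fallf_risef x b m : (-1) ^+ m * fallf x b m = risef (- x) b m.
Proof.
elim: m x => [|m IH] x; first by rewrite expr0 mul1r fallf0 risef0.
rewrite fallfS_l risefS_l exprS.
have -> : - x + b = - (x - b) by ring.
rewrite -IH; ring.
Qed.

Lemma risef_zero b k : risef 0 b k = (k == 0%N)%:R.
Proof. by case: k => [|k]; rewrite ?risef0 // risefS_l mul0r. Qed.


Opaque risef fallf.
Lemma vandermonde b k : forall x z,
  \sum_(j < k.+1) 'C(k, j)%:R * risef x b j * risef z b (k - j) = risef (x + z) b k.
Proof.
elim: k => [|k IH] x z.
  by rewrite big_ord_recl big_ord0 /= !risef0 bin0 mulr1 mul1r addr0.
rewrite risefS_l.
have -> : (x + z) * risef (x + z + b) b k
   = x * risef ((x + b) + z) b k + z * risef (x + (z + b)) b k.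
  rewrite (_ : x + b + z = x + z + b); last ring.
  rewrite (_ : x + (z + b) = x + z + b); last ring. ring.
rewrite -!IH !big_distrr /=.
rewrite big_ord_recl /= bin0 subn0.
under eq_bigr => i _ do rewrite /bump /= add1n binS natrD subSS !mulrDl.
rewrite big_split /=.
rewrite [X in _ = X + _](_ : _ = \sum_(i < k.+1) 'C(k, i)%:R * risef x b i.+1 * risef z b (k - i)); last first.
  apply: eq_bigr => i _; rewrite (risefS_l x).
  ring.
rewrite [X in _ = _ + X](_ : _ = \sum_(j < k.+1) 'C(k, j)%:R * risef x b j * risef z b (k.+1 - j)); last first.
  apply: eq_bigr => i _; rewrite subSn; last by rewrite -ltnS ltn_ord.
  rewrite (risefS_l z).
  ring.
rewrite [X in _ + X = _]addrC addrCA; congr (_ + _).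
rewrite [RHS]big_ord_recl /= subn0 bin0 [X in _ + X = _]big_ord_recr /= bin_small // mul0r mul0r addr0 /=.
congr (_ + _); apply: eq_bigr => i _; rewrite /bump /= add1n subSS //.
Qed.

Lemma my_ortho c b k :
  \sum_(j < k.+1) (-1) ^+ (k - j) * 'C(k, j)%:R * fallf c b (k - j) * risef c b j
  = (k == 0%N)%:R.
Proof.
have := vandermonde b k c (- c); rewrite addrN risef_zero => <-.
apply: eq_bigr => j _; rewrite -fallf_risef; ring.
Qed.

Lemma my_sum_shift k (w X : nat -> F) : w k.+1 = 0 ->
  \sum_(j < k.+1) w j * (match (j : nat) with 0 => 0 | i.+1 => X i end)
  = \sum_(i < k.+1) w i.+1 * X i.
Proof.
move=> wk; rewrite big_ord_recl mulr0 add0r [RHS]big_ord_recr /= wk mul0r addr0.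
by apply: eq_bigr => i _; rewrite /bump /= add1n.
Qed.

Lemma my_diff_eq (x y d K : F) : x - y = d * K -> d = 0 -> x = y.
Proof. by move=> H d0; apply/eqP; rewrite -subr_eq0 H d0 mul0r. Qed.

Variables a b c0 cinf : F.

Definition ee n j := b ^+ j * j`!%:R * genEuler a b c0 cinf n j.

Lemma ee_rec n j : ee n.+1 j = ((- a) * n%:R + b * j%:R + c0) * ee n j
  + match j with 0 => 0 | i.+1 => b * i.+1%:R * ((a + b) * n%:R + (- b) * i%:R + cinf) * ee n i end.
Proof.
case: j => [|i]; rewrite /ee /genEuler /=.
  rewrite expr0 fact0 mulr0 addr0 addr0; ring.
rewrite -/(genEuler a b c0 cinf n i.+1) -/(genEuler a b c0 cinf n i).
move: (genEuler a b c0 cinf n i.+1) (genEuler a b c0 cinf n i) => E1 E0.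
rewrite factS natrM exprS; ring.
Qed.

Lemma ee0 k : ee 0 k = (k == 0%N)%:R.
Proof. by case: k => [|k]; rewrite /ee /genEuler /= ?mulr0 // expr0 mul1r mulr1. Qed.

End Gen.

Opaque risef fallf genEuler.

Section S2.
Context {F : comRingType}.
Variables a b c0 cinf : F.

Lemma core2 n j m :
  (b * (j + m)%:R + c0 - n%:R * a) * risef (b * n%:R + c0 + cinf) b m
  = risef (b * n%:R + c0 + cinf + b) b m * ((- a) * n%:R + b * j%:R + c0)
    + m%:R * b * risef (b * n%:R + c0 + cinf + b) b m.-1
      * ((a + b) * n%:R + (- b) * j%:R + cinf).
Proof.
case: m => [|m]; first by rewrite !risef0; ring.
rewrite risefS_l risefS_r /=.
move: (risef _ _ m) => X; ring.
Qed.

Lemma claim2 n : forall k,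
  risef (c0 + cinf) b k * fallf (b * k%:R + c0) a n =
  \sum_(j < k.+1) 'C(k, j)%:R * risef (b * n%:R + c0 + cinf) b (k - j)
     * ee a b c0 cinf n j.
Proof.
elim: n => [|n IH] k.
  rewrite big_ord_recl big1 ?addr0; last by move=> i _; rewrite ee0 mulr0.
  by rewrite fallf0 ee0 mulr0 add0r subn0 bin0 !mulr1 mul1r.
under eq_bigr => j _ do rewrite ee_rec mulrDr.
rewrite big_split /= (@my_sum_shift _ k (fun j : nat => 'C(k, j)%:R * risef (b * n.+1%:R + c0 + cinf) b (k - j))
   (fun i : nat => b * i.+1%:R * ((a + b) * n%:R + (- b) * i%:R + cinf) * ee a b c0 cinf n i)) /=;
  last by rewrite bin_small // mul0r.
rewrite fallfS_r mulrA IH big_distrl -big_split /=.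
apply: eq_bigr => -[j /= jk] _.
rewrite ltnS in jk.
rewrite (_ : b * n.+1%:R + c0 + cinf = b * n%:R + c0 + cinf + b); last ring.
rewrite -(subnKC jk) addKn subnS addKn.
move: (k - j)%N => m.
have H : 'C(j + m, j.+1)%:R * j.+1%:R = m%:R * 'C(j + m, j)%:R :> F.
  by rewrite -!natrM mulnC mul_bin_left addKn.
have K := core2 n j m.
move: (b * n%:R + c0 + cinf) K => y K.
rewrite [X in _ = _ + X](_ : _ = ('C(j + m, j.+1)%:R * j.+1%:R) * (b * risef (y + b) b m.-1
   * ((a + b) * n%:R + - b * j%:R + cinf) * ee a b c0 cinf n j)); last ring.
rewrite H.
rewrite (_ : _ * _ * _ * _ = 'C(j + m, j)%:R * ee a b c0 cinf n j *
   ((b * (j + m)%:R + c0 - n%:R * a) * risef y b m)); last ring.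
rewrite K; ring.
Qed.
End S2.

Section S3.
Context {F : comRingType}.
Variables a b c0 cinf : F.

Lemma claim1 n : forall k,
  ee a b c0 cinf n k =
  \sum_(j < k.+1) (-1) ^+ (k - j) * 'C(k, j)%:R
       * fallf (b * n%:R + c0 + cinf) b (k - j)
       * risef (c0 + cinf) b j
       * fallf (b * j%:R + c0) a n.
Proof.
elim: n => [|n IH] k.
  rewrite ee0 -(my_ortho (c0 + cinf) b k).
  by apply: eq_bigr => j _; rewrite fallf0 mulr1 mulr0 add0r.
rewrite (_ : b * n.+1%:R + c0 + cinf = b * n%:R + c0 + cinf + b); last ring.
case: k => [|p].
  rewrite ee_rec addr0 IH !big_ord_recl !big_ord0 /= !addr0 fallfS_r !fallf0.
  move: (risef _ _ _) (fallf _ _ _) => X Y; ring.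
rewrite ee_rec (IH p.+1) (IH p).
rewrite [X in _ + _ * X = _](_ : _ = \sum_(j < p.+2) (-1) ^+ (p - j) * 'C(p, j)%:R
       * fallf (b * n%:R + c0 + cinf) b (p - j)
       * risef (c0 + cinf) b j
       * fallf (b * j%:R + c0) a n); last first.
  by rewrite [RHS]big_ord_recr /= bin_small // mulr0 !mul0r addr0.
rewrite !big_distrr -big_split /=.
apply: eq_bigr => -[j /= jk] _.
rewrite ltnS leq_eqVlt in jk; case/orP: jk => [/eqP ->| jk].
  rewrite subnn (_ : (p - p.+1 = 0)%N); last by apply/eqP; rewrite subn_eq0 leqnSn.
  rewrite (bin_small (ltnSn p)) binn fallfS_r !fallf0.
  move: (risef _ _ _) (fallf _ _ _) => X Y; ring.
rewrite ltnS in jk.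
rewrite -(subnKC jk) -addnS !addKn.
move: (p - j)%N => q.
have H : (j + q.+1)%:R * 'C(j + q, j)%:R = q.+1%:R * 'C(j + q.+1, j)%:R :> F.
  by rewrite -!natrM addnS mul_bin_down subSn ?leq_addr // addKn.
rewrite (fallfS_r (b * j%:R + c0)) (fallfS_r (b * n%:R + c0 + cinf)) fallfS_l addrK exprS.
move: (fallf (b * n%:R + c0 + cinf) b q) (fallf (b * j%:R + c0) a n) (risef (c0 + cinf) b j) => G f r.
rewrite [X in _ + X = _](_ : _ = ((j + q.+1)%:R * 'C(j + q, j)%:R) *
   (b * ((a + b) * n%:R + - b * (j + q)%:R + cinf) * (-1) ^+ q * G * r * f)); last ring.
rewrite H; ring.
Qed.
End S3.

Theorem mainTheorem11 (R : realType) (n k : nat) (a b c0 cinf : R[i]) :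
  (k <= n)%N ->
  b ^+ k * k`!%:R * genEuler a b c0 cinf n k =
    \sum_(j < k.+1) (-1) ^+ (k - j) * 'C(k, j)%:R
       * fallf (b * n%:R + c0 + cinf) b (k - j)
       * risef (c0 + cinf) b j
       * fallf (b * j%:R + c0) a n
  /\
  risef (c0 + cinf) b k * fallf (b * k%:R + c0) a n =
    \sum_(j < k.+1) 'C(k, j)%:R
       * risef (b * n%:R + c0 + cinf) b (k - j)
       * (b ^+ j * j`!%:R * genEuler a b c0 cinf n j).
Proof.
move=> _; split.
  exact: (claim1 a b c0 cinf n k).
exact: (claim2 a b c0 cinf n k).
Qed.
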